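(* Let $\mathcal{A}=\langle\Sigma,Q,Q_0,\delta,\alpha\rangle$ be a GFG automaton and let $g=\langle\Sigma,Q,M,m_0,\rho,\tau\rangle$ be a finite-state strategy (transducer) witnessing its GFGness. Then: (1) for every state $q\in Q$ and every memory $m\in M$ of $q$ (i.e. $\tau(m)=q$) that is reachable in $\mathcal{A}_g$, we have $L(\mathcal{A}_g^m)=L(\mathcal{A}^q)$; (2) for all memories $m,m'\in M$ that are reachable in $\mathcal{A}_g$ with $\tau(m)=\tau(m')$, we have $L(\mathcal{A}_g^m)=L(\mathcal{A}_g^{m'})$.
   Context: An automaton is $\mathcal{A}=\langle\Sigma,Q,Q_0,\delta,\alpha\rangle$ with finite alphabet $\Sigma$, finite state set $Q$, initial states $Q_0\subseteq Q$, transition function $\delta:Q\times\Sigma\to 2^Q$ and an acceptance condition $\alpha$ (Büchi, co-Büchi, parity, Rabin or Streett). A run on $w=a_1a_2\cdots$ is $r_0r_1\cdots$ with $r_0\in Q_0$ and $r_{i+1}\in\delta(r_i,a_{i+1})$; it is accepting if the set $\inf(r)$ of states visited infinitely often satisfies $\alpha$; $L(\mathcal{A})$ is the set of words with an accepting run. $\mathcal{A}^q$ is $\mathcal{A}$ with initial state set $\{q\}$. $\mathcal{A}$ is good for games (GFG) if there is a strategy $g:\Sigma^*\to Q$ such that for every $w=a_1a_2\cdots$, the sequence $g(\epsilon),g(a_1),g(a_1a_2),\ldots$ is a run of $\mathcal{A}$ on $w$ that is accepting whenever $w\in L(\mathcal{A})$; $g$ then witnesses $\mathcal{A}$'s GFGness.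 A finite-state strategy is given by a transducer $\langle\Sigma,Q,M,m_0,\rho,\tau\rangle$ with finite memory set $M$, initial memory $m_0$, update $\rho:M\times\Sigma\to M$ (extended to words by $\rho(\epsilon)=m_0$, $\rho(ua)=\rho(\rho(u),a)$) and output $\tau:M\to Q$, generating $g(u)=\tau(\rho(u))$. A memory $m$ with $\tau(m)=q$ is a memory of $q$. $\mathcal{A}_g=\langle\Sigma,M,m_0,\rho,\alpha_g\rangle$ is the deterministic automaton where $\alpha_g$ is obtained from $\alpha$ by replacing every set $F\subseteq Q$ occurring in $\alpha$ by $\{m\mid\tau(m)\in F\}$ (for parity, $m$ gets the priority of $\tau(m)$); $\mathcal{A}_g^m$ is $\mathcal{A}_g$ with initial memory $m$. *)

(* Defs.v *)
From mathcomp Require Import all_boot.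
Set Implicit Arguments. Unset Strict Implicit. Unset Printing Implicit Defensive.

Inductive acc_cond (Q : finType) : Type :=
  | Buchi of {set Q}
  | CoBuchi of {set Q}
  | Parity of (Q -> nat)
  | Rabin of seq ({set Q} * {set Q})
  | Streett of seq ({set Q} * {set Q}).

(* Infinite words / runs are functions nat -> _ ; w i is the letter a_{i+1}. *)
Definition word (S : Type) := nat -> S.

Definition inf_set (Q : Type) (r : nat -> Q) (q : Q) : Prop :=
  forall n, exists2 k, n <= k & r k = q.

Definition meets (Q : finType) (r : nat -> Q) (F : {set Q}) : Prop :=
  exists2 q, inf_set r q & q \in F.

Definition satisfies (Q : finType) (a : acc_cond Q) (r : nat -> Q) : Prop :=
  match a with
  | Buchi F => meets r F
  | CoBuchi F => ~ meets r F
  | Parity p => exists q, [/\ inf_set r q, ~~ odd (p q) &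
                    forall q', inf_set r q' -> p q <= p q']
  | Rabin pairs => exists2 EF, EF \in pairs & ~ meets r EF.1 /\ meets r EF.2
  | Streett pairs => forall EF, EF \in pairs -> meets r EF.2 -> meets r EF.1
  end.

Record automaton (S Q : finType) := Automaton {
  init : {set Q};
  delta : Q -> S -> {set Q};
  alpha : acc_cond Q }.

Definition is_run (S Q : finType) (A : automaton S Q) (w : word S) (r : nat -> Q) :=
  r 0 \in init A /\ forall i, r i.+1 \in delta A (r i) (w i).

Definition accepting (S Q : finType) (A : automaton S Q) (r : nat -> Q) :=
  satisfies (alpha A) r.

Definition lang (S Q : finType) (A : automaton S Q) (w : word S) : Prop :=
  exists r, is_run A w r /\ accepting A r.

Definition from (S Q : finType) (A : automaton S Q) (q : Q) : automaton S Q :=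
  Automaton [set q] (delta A) (alpha A).

Definition prefix (S : Type) (w : word S) (i : nat) : seq S := mkseq w i.

Definition witnesses_gfg (S Q : finType) (A : automaton S Q) (g : seq S -> Q) : Prop :=
  forall w : word S, is_run A w (fun i => g (prefix w i)) /\
    (lang A w -> accepting A (fun i => g (prefix w i))).

Definition is_gfg (S Q : finType) (A : automaton S Q) : Prop :=
  exists g, witnesses_gfg A g.

Record transducer (S Q : finType) := Transducer {
  memT : finType;
  m0 : memT;
  rho : memT -> S -> memT;
  tau : memT -> Q }.
Arguments m0 {S Q} t.
Arguments rho {S Q} t _ _.
Arguments tau {S Q} t _.

Definition rho_star (S Q : finType) (T : transducer S Q) (u : seq S) : memT T :=
  foldl (rho T) (m0 T) u.

Definition strat (S Q : finType) (T : transducer S Q) : seq S -> Q :=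
  fun u => tau T (rho_star T u).

Definition map_acc (Q M : finType) (t : M -> Q) (a : acc_cond Q) : acc_cond M :=
  let pre := fun F : {set Q} => [set m | t m \in F] in
  match a with
  | Buchi F => Buchi (pre F)
  | CoBuchi F => CoBuchi (pre F)
  | Parity p => Parity (fun m => p (t m))
  | Rabin ps => Rabin [seq (pre EF.1, pre EF.2) | EF <- ps]
  | Streett ps => Streett [seq (pre EF.1, pre EF.2) | EF <- ps]
  end.

Definition A_g (S Q : finType) (A : automaton S Q) (T : transducer S Q)
  : automaton S (memT T) :=
  Automaton [set m0 T] (fun m a => [set rho T m a]) (map_acc (tau T) (alpha A)).

Definition reachable (S Q : finType) (T : transducer S Q) (m : memT T) : Prop :=
  exists u : seq S, rho_star T u = m.
Arguments reachable {S Q} T m.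
Arguments rho_star {S Q} T u.
Arguments strat {S Q} T u.
Arguments A_g {S Q} A T.

(* Main.v *)
Require Import Defs.
From mathcomp Require Import all_boot.
From mathcomp Require Import zify.
From Stdlib Require Import Classical.

Set Implicit Arguments. Unset Strict Implicit.

Lemma inf_shift (Q : Type) (f g : nat -> Q) (k : nat) (q : Q) :
  (forall i, f (i + k) = g i) -> (inf_set f q <-> inf_set g q).
Proof.
move=> H; split=> Hi n.
- have [k' Hk' Hf] := Hi (n + k).
  exists (k' - k); first lia.
  rewrite -H subnK //; lia.
- have [j Hj Hg] := Hi n.
  exists (j + k); first lia.
  by rewrite H.
Qed.

Lemma sat_inf (Q : finType) (a : acc_cond Q) (r r' : nat -> Q) :
  (forall q, inf_set r q <-> inf_set r' q) -> satisfies a r -> satisfies a r'.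
Proof.
move=> H.
have HM : forall F, meets r F <-> meets r' F.
  by move=> F; split=> -[q Hq HF]; exists q => //; apply/H.
case: a => [F|F|p|ps|ps] /=.
- by move/HM.
- by move=> Hn /HM.
- move=> [q [Hq Hp Hmin]]; exists q; split => //; first by apply/H.
  by move=> q' /H; apply: Hmin.
- by move=> [EF HEF [H1 H2]]; exists EF => //; split; [move/HM|apply/HM].
- by move=> Hs EF HEF /HM H2; apply/HM; apply: Hs.
Qed.

Lemma bound_fin (M : finType) (P : M -> nat -> Prop) :
  (forall m N N', N <= N' -> P m N -> P m N') ->
  (forall m, exists N, P m N) -> exists N, forall m, P m N.
Proof.
move=> Hmono Hex.
suff: forall s : seq M, exists N, forall m, m \in s -> P m N.
  by move=> /(_ (enum M)) [N HN]; exists N => m; apply: HN; rewrite mem_enum.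
elim=> [|x s [N HN]]; first by exists 0.
have [Nx HNx] := Hex x.
exists (maxn N Nx) => m; rewrite inE => /orP [/eqP ->|Hm].
  by apply: Hmono HNx; apply: leq_maxr.
by apply: Hmono (HN _ Hm); apply: leq_maxl.
Qed.

Lemma pigeon (M Q : finType) (t : M -> Q) (r : nat -> M) (q : Q) :
  inf_set (fun i => t (r i)) q <-> exists m, t m = q /\ inf_set r m.
Proof.
split; last first.
  move=> [m [<- Hm]] n; have [k Hk Hr] := Hm n; exists k => //; by rewrite Hr.
move=> Hi; apply: NNPP => Hno.
have [N HN] : exists N, forall m, (forall k, N <= k -> r k = m -> t m <> q).
  apply: (bound_fin (P := fun m N => forall k, N <= k -> r k = m -> t m <> q)).
    by move=> m N N' HNN' HP k Hk; apply: HP; apply: leq_trans Hk.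
  move=> m; case: (classic (t m = q)) => Htm; last by exists 0.
  case: (classic (inf_set r m)) => Hinf; first by exfalso; apply: Hno; exists m.
  apply: NNPP => Hc; apply: Hinf => n; apply: NNPP => Hc2; apply: Hc; exists n.
  move=> k Hk Hrk; exfalso; apply: Hc2; by exists k.
have [k Hk Htk] := Hi N.
by apply: (HN (r k) k Hk erefl).
Qed.

Lemma sat_map (M Q : finType) (t : M -> Q) (a : acc_cond Q) (r : nat -> M) :
  satisfies (map_acc t a) r <-> satisfies a (fun i => t (r i)).
Proof.
have HM : forall F : {set Q}, meets r [set m | t m \in F] <-> meets (fun i => t (r i)) F.
  move=> F; split.
    move=> [m Hm]; rewrite inE => HF; exists (t m) => //.
    by apply/pigeon; exists m.
  move=> [q /pigeon [m [Hm Hinf]] HF]; exists m => //; by rewrite inE Hm.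
case: a => [F|F|p|ps|ps] /=.
- exact: HM.
- by split=> Hn Hc; apply: Hn; apply/HM.
- split.
    move=> [m [Hm Hp Hmin]]; exists (t m); split => //.
      by apply/pigeon; exists m.
    by move=> q' /pigeon [m' [<- Hm']]; apply: Hmin.
  move=> [q [/pigeon [m [Hmq Hm]] Hp Hmin]]; exists m; split => //.
    by rewrite Hmq.
  move=> m' Hm'; rewrite Hmq; apply: Hmin; apply/pigeon; by exists m'.
- split.
    move=> [EF /mapP [EF0 HEF0 ->] [H1 H2]]; exists EF0 => //.
    by split; [move/HM|apply/HM].
  move=> [EF HEF [H1 H2]]; exists ([set m | t m \in EF.1], [set m | t m \in EF.2]).
    by apply/mapP; exists EF.
  by split; [move/HM|apply/HM].
- split.
    move=> Hs EF HEF /HM H2; apply/HM.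
    apply: (Hs ([set m | t m \in EF.1], [set m | t m \in EF.2])) => //.
    by apply/mapP; exists EF.
  move=> Hs EF /mapP [EF0 HEF0 ->] /HM H2; apply/HM; by apply: Hs.
Qed.

Definition catw (S : Type) (u : seq S) (w : word S) : word S :=
  fun i => if i < size u then nth (w 0) u i else w (i - size u).

Lemma prefix_catw_ge (S : Type) (u : seq S) (w : word S) k :
  Defs.prefix (catw u w) (size u + k) = u ++ Defs.prefix w k.
Proof.
apply: (@eq_from_nth _ (w 0)).
  by rewrite /Defs.prefix size_cat !size_mkseq.
move=> j; rewrite /Defs.prefix size_mkseq => Hj.
rewrite nth_mkseq // nth_cat /catw.
case: ifP => // Hju; rewrite nth_mkseq //; lia.
Qed.

Lemma prefixS (S : Type) (w : word S) k : Defs.prefix w k.+1 = rcons (Defs.prefix w k) (w k).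
Proof. by rewrite /Defs.prefix mkseqS. Qed.

Theorem lemma2 (S Q : finType) (A : automaton S Q) (T : transducer S Q) :
  is_gfg A -> witnesses_gfg A (strat T) ->
  (forall (q : Q) (m : memT T), tau T m = q -> reachable T m ->
     forall w : word S, lang (from (A_g A T) m) w <-> lang (from A q) w) /\
  (forall m m' : memT T, reachable T m -> reachable T m' -> tau T m = tau T m' ->
     forall w : word S, lang (from (A_g A T) m) w <-> lang (from (A_g A T) m') w).
Proof.
move=> _ G.
have P1 : forall (q : Q) (m : memT T), tau T m = q -> reachable T m ->
     forall w : word S, lang (from (A_g A T) m) w <-> lang (from A q) w.
  move=> q m Hq [u Hu] w.
  set rm := fun i => foldl (rho T) m (Defs.prefix w i).
  have Hrm : forall i, strat T (Defs.prefix (catw u w) (size u + i)) = tau T (rm i).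
    by move=> i; rewrite /strat prefix_catw_ge /rho_star foldl_cat -/(rho_star T u) Hu.
  have Hcw : forall i, catw u w (size u + i) = w i.
    by move=> i; rewrite /catw ltnNge leq_addr /= addKn.
  have [Grun Gacc] := G (catw u w).
  split.
  - move=> [r [[Hr0 Hrs] Hacc]].
    have Hr : forall i, r i = rm i.
      elim=> [|i IH]; first by move: Hr0; rewrite /= inE => /eqP ->.
      move: (Hrs i); rewrite /= inE => /eqP ->.
      by rewrite IH /rm prefixS foldl_rcons.
    exists (fun i => tau T (r i)); split; last by apply/sat_map.
    split; first by rewrite /= inE Hr /rm /= Hq.
    move=> i; rewrite /= !Hr; have H := Grun.2 (size u + i); rewrite -addnS !Hrm Hcw in H; exact: H.
  - move=> [r [[Hr0 Hrs] Hacc]].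
    move: Hr0; rewrite /= inE => /eqP Hr0.
    set R := fun i => if i <= size u then strat T (Defs.prefix (catw u w) i)
                      else r (i - size u).
    have HR : forall i, size u <= i -> R i = r (i - size u).
      move=> i Hi; rewrite /R; case: ifP => Hle //.
      have -> : i = size u + 0 by lia.
      by rewrite Hrm addKn Hr0 -Hq.
    have Hlang : lang A (catw u w).
      exists R; split.
        split; first exact: Grun.1.
        move=> i; case: (leqP (size u) i) => Hi.
          rewrite (HR i.+1); last by lia. rewrite (HR i Hi).
          rewrite subSn //.
          have -> : catw u w i = w (i - size u).
            by rewrite /catw ltnNge Hi.
          exact: Hrs.
        rewrite /R Hi ltnW //; exact: (Grun.2 i).
      apply: (sat_inf (r := r)) Hacc => q'.
      apply: iff_sym; apply: (inf_shift (k := size u)) => i.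
      by rewrite HR ?addnK // leq_addl.
    have Hacc2 := Gacc Hlang.
    exists rm; split.
      split; first by rewrite /= inE.
      by move=> i; rewrite /= inE /rm prefixS foldl_rcons.
    apply/sat_map; apply: (sat_inf (a := alpha A) (r := fun i => strat T (Defs.prefix (catw u w) i))); last exact: Hacc2. move=> q'.
    apply: (inf_shift (k := size u)) => i.
    by rewrite addnC Hrm.
split => //.
move=> m m' Hm Hm' Heq w.
rewrite (P1 _ m erefl Hm) (P1 (tau T m) m' (esym Heq) Hm').
done.
Qed.
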